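(* Let $G$ be a finite simple graph with edge weight function $w$ and vertex weight function $w_1$, let $u\in V(G)$ and let $\theta$ be a real number. Then $$\mathrm{mult}(\theta,G)-1\le \mathrm{mult}(\theta,G\setminus u)\le \mathrm{mult}(\theta,G)+1.$$
   Context: An edge weight function $w$ assigns a nonzero complex number to each edge; a vertex weight function $w_1$ assigns a real number (possibly $0$) to each vertex; subgraphs carry restricted weights; $G\setminus u$ deletes $u$ and its incident edges. For $A\subseteq E(G)$, $w(A)=\prod_{e\in A}w(e)$. $\mu_w(G,x)=\sum_{M}(-1)^{|M|}|w(M)|^2x^{n-2|M|}$ over all matchings $M$ (including empty). $\eta_{(w,w_1)}(G,x)=\sum_{S\subseteq V(G)}(-1)^{|V(G)\setminus S|}\big(\prod_{v\in V(G)\setminus S}w_1(v)\big)\mu_w(G[S],x)$ with $G[S]$ the induced subgraph; $\mu_w,\eta_{(w,w_1)}$ of the empty graph equal $1$. $\mathrm{mult}(\theta,H)$ is the multiplicity of $\theta$ as a root of $\eta_{(w,w_1)}(H,x)$ ($0$ if not a root). *)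

(* Defs.v *)
From HB Require Import structures.
From mathcomp Require Import all_boot all_order all_algebra.
From mathcomp Require Import reals.
From mathcomp Require Import complex.
Set Implicit Arguments. Unset Strict Implicit. Unset Printing Implicit Defensive.
Import Order.TTheory GRing.Theory Num.Theory.
Local Open Scope ring_scope.

Section WeightedGraphs.
Variables (R : realType) (V : finType).
Definition simple_graph (E : {set {set V}}) : Prop :=
  forall e, e \in E -> #|e| = 2%N.

(* M is a matching of the induced subgraph G[S]: a set of edges of E
   contained in S, pairwise disjoint. *)
Definition matching_in (E : {set {set V}}) (S : {set V}) (M : {set {set V}}) :=
  [&& M \subset E, [forall e in M, e \subset S] & trivIset M].

Definition mu_w (E : {set {set V}}) (w : {set V} -> R[i]) (S : {set V})
  : {poly R[i]} :=
  \sum_(M : {set {set V}} | matching_in E S M)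
     ((-1) ^+ #|M| * \prod_(e in M) (`|w e| ^+ 2)) *: 'X^(#|S| - 2 * #|M|).

Definition eta_w (E : {set {set V}}) (w : {set V} -> R[i]) (w1 : V -> R)
  (S : {set V}) : {poly R[i]} :=
  \sum_(T : {set V} | T \subset S)
     ((-1) ^+ #|S :\: T| * \prod_(v in S :\: T) ((w1 v)%:C)%C) *: mu_w E w T.

Definition mult (E : {set {set V}}) (w : {set V} -> R[i]) (w1 : V -> R)
  (theta : R) (S : {set V}) : nat :=
  mup ((theta%:C)%C) (eta_w E w w1 S).
End WeightedGraphs.

(* Main.v *)
Require Import Defs.
From HB Require Import structures.
From mathcomp Require Import all_boot all_order all_algebra.
From mathcomp Require Import reals.
From mathcomp Require Import complex.
From mathcomp Require Import zify ring lra.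
Set Implicit Arguments. Unset Strict Implicit. Unset Printing Implicit Defensive.
Import Order.TTheory GRing.Theory Num.Theory.
Local Open Scope ring_scope.

Section Comb.
Variables (V : finType) (E : {set {set V}}).
Hypothesis simE : simple_graph E.

Lemma edge2 u v : [set u; v] \in E -> u != v.
Proof.
move=> /simE; apply: contra_eqN => /eqP ->.
by rewrite setUid cards1.
Qed.

Lemma edge_has u e : e \in E -> u \in e -> exists v, v != u /\ e = [set u; v].
Proof.
move=> /simE /eqP /cards2P [x [y [xy ->]]]; rewrite !inE => /orP[]/eqP->.
  by exists y; split => //; rewrite eq_sym.
by exists x; split => //; rewrite setUC.
Qed.

Lemma mi_card (S : {set V}) M : matching_in E S M -> (2 * #|M| <= #|S|)%N.
Proof.
case/and3P=> ME /forall_inP MS /eqP tri.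
have -> : (2 * #|M| = \sum_(e in M) #|e|)%N.
  rewrite (eq_bigr (fun _ => 2%N)); first by rewrite sum_nat_const mulnC.
  by move=> e eM; rewrite simE // (subsetP ME).
rewrite tri; apply: subset_leq_card; apply/bigcupsP => e eM; exact: MS.
Qed.

Lemma mi_sub (S T : {set V}) M : S \subset T -> matching_in E S M -> matching_in E T M.
Proof.
move=> ST /and3P[ME /forall_inP MS tri]; apply/and3P; split => //.
by apply/forall_inP => e eM; apply: subset_trans (MS e eM) ST.
Qed.

Lemma set0_notin (M : {set {set V}}) : M \subset E -> set0 \notin M.
Proof.
move=> ME; apply/negP => /(subsetP ME) /simE; by rewrite cards0.
Qed.

Lemma mi_step (T : {set V}) u v M : u \notin T -> v \in T -> [set u; v] \in E ->
  [&& matching_in E (u |: T) ([set u; v] |: M), ~~ matching_in E T ([set u; v] |: M),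
      (v \in T) && ([set u; v] \in [set u; v] |: M)
   & (([set u; v] |: M) :\ [set u; v] == M)]
  = matching_in E (T :\ v) M.
Proof.
move=> uT vT eE; set e := [set u; v].
have ue : u \in e by rewrite !inE eqxx.
have ve : v \in e by rewrite !inE eqxx orbT.
apply/idP/idP.
- case/and4P=> /and3P[ME /forall_inP MS tri] _ _ /eqP Me.
  have eM : e \notin M by rewrite -Me !inE eqxx.
  apply/and3P; split.
  + by apply: subset_trans ME; apply: subsetUr.
  + apply/forall_inP => f fM.
    have fM' : f \in e |: M by rewrite !inE fM orbT.
    have dis : [disjoint e & f].
      move/trivIsetP: tri; apply => //; first by rewrite !inE eqxx.
      by apply: contraNneq eM => ->.
    apply/subsetP => x xf; rewrite !inE.
    have := subsetP (MS f fM') x xf; rewrite !inE => /orP[/eqP xu|xT].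
      by move: xf; rewrite xu (disjointFr dis ue).
    rewrite xT andbT; apply/eqP => xv.
    by move: xf; rewrite xv (disjointFr dis ve).
  + by apply: trivIsetS tri; apply: subsetUr.
- case/and3P=> ME /forall_inP MS tri.
  have eM : e \notin M.
    apply/negP => /MS /subsetP /(_ v ve); by rewrite !inE eqxx.
  have ME' : e |: M \subset E by rewrite subUset sub1set eE.
  apply/and4P; split.
  + apply/and3P; split => //.
    * apply/forall_inP => f; rewrite !inE => /orP[/eqP->|fM].
        by rewrite subUset !sub1set !inE eqxx vT orbT.
      apply: subset_trans (MS f fM) _; apply/subsetP => x; rewrite !inE.
      by case/andP=> _ ->; rewrite orbT.
    * case: (@trivIsetU1 _ e M _ tri (set0_notin ME)) => // f fM.
      rewrite disjoints_subset; apply/subsetP => x; rewrite !inE => /orP[]/eqP->.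
        by apply/negP => /(subsetP (MS f fM)); rewrite !inE (negbTE uT) andbF.
      by apply/negP => /(subsetP (MS f fM)); rewrite !inE eqxx.
  + apply/negP => /and3P[_ /forall_inP /(_ e) H _].
    have := H (setU11 _ _); move/subsetP/(_ u ue); by rewrite (negbTE uT).
  + by rewrite vT setU11.
  + by rewrite setU1K.
Qed.

Lemma mi_unique (T : {set V}) u M : u \notin T -> matching_in E (u |: T) M -> ~~ matching_in E T M ->
  exists v, [/\ v \in T, [set u; v] \in M &
     forall v', (v' \in T) && ([set u; v'] \in M) = (v' == v)].
Proof.
move=> uT /and3P[ME /forall_inP MS tri] nT.
have [f fM fT] : exists2 f, f \in M & ~~ (f \subset T).
  apply/exists_inP; move: nT; apply: contraR; rewrite negb_exists_in => /forall_inP H.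
  apply/and3P; split => //; apply/forall_inP => f fM; by have := H f fM; rewrite negbK.
have uf : u \in f.
  move: fT; apply: contraR => nuf; apply/subsetP => x xf.
  have := subsetP (MS f fM) x xf; rewrite !inE => /orP[/eqP xu|//].
  by move: nuf; rewrite -xu xf.
have [v [vu ef]] := edge_has (subsetP ME f fM) uf.
have vT : v \in T.
  have := subsetP (MS f fM) v; rewrite ef !inE eqxx orbT => /(_ isT).
  by rewrite (negbTE vu).
exists v; split => //; first by rewrite -ef.
move=> v'; apply/idP/idP; last by move/eqP->; rewrite vT -ef fM.
case/andP=> v'T e'M.
have : [set u; v'] == f.
  apply/negPn/negP => ne; move/trivIsetP: tri => /(_ _ _ e'M fM ne).
  by move=> dis; move: uf; rewrite (disjointFr dis) // !inE eqxx.
rewrite ef => /eqP/setP/(_ v'); rewrite !inE eqxx orbT eq_sym => /esym/orP[]//.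
by move/eqP=> vu'; move: uT; rewrite vu' v'T.
Qed.

End Comb.


Section Rec.
Variables (R : comRingType) (V : finType) (E : {set {set V}}) (c : {set V} -> R).
Hypothesis simE : simple_graph E.

Definition muR (S : {set V}) : {poly R} :=
  \sum_(M : {set {set V}} | matching_in E S M)
     ((-1) ^+ #|M| * \prod_(e in M) c e) *: 'X^(#|S| - 2 * #|M|).

Lemma mu_rec (T : {set V}) u : u \notin T ->
  muR (u |: T) = 'X * muR T - \sum_(v in T | [set u; v] \in E) c [set u; v] *: muR (T :\ v).
Proof.
move=> uT; rewrite /muR (bigID (fun M => matching_in E T M)) /=.
congr (_ + _).
  rewrite mulr_sumr; apply: eq_big.
    move=> M; apply/andP/idP => [[]//|H]; split => //.
    by apply: mi_sub H; apply: subsetUr.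
  move=> M /andP[_ HM]; rewrite -scalerAr -exprS cardsU1 uT.
  congr (_ *: 'X^_); have := mi_card simE HM; rewrite /=; lia.
rewrite -sumrN.
transitivity (\sum_(M | matching_in E (u |: T) M && ~~ matching_in E T M)
   \sum_(v in T | [set u; v] \in M)
     ((-1) ^+ #|M| * \prod_(e in M) c e) *: 'X^(#|u |: T| - 2 * #|M|)).
  apply: eq_bigr => M /andP[H1 H2].
  have [v [vT eM uni]] := mi_unique simE uT H1 H2.
  by rewrite (big_pred1 v) // => v'; rewrite /= uni.
rewrite (exchange_big_dep (fun v => v \in T)) /=; last by move=> ? ? _ /andP[].
rewrite (bigID (fun v => [set u; v] \in E)) /= [X in _ + X]big1 ?addr0; last first.
  move=> v /andP[vT nE]; apply: big_pred0 => M.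
  apply/negP => /andP[/andP[/and3P[ME _ _] _] /andP[_ eM]].
  by move: nE; rewrite (subsetP ME _ eM).
apply: eq_bigr => v /andP[vT eE].
set e := [set u; v].
rewrite (reindex_onto (fun M' => e |: M') (fun M => M :\ e)) /=; last first.
  by move=> M /andP[_ /andP[_ eM]]; rewrite setD1K.
have eqP1 : forall M', (matching_in E (u |: T) (e |: M') && ~~ matching_in E T (e |: M'))
   && ((v \in T) && (e \in e |: M')) && ((e |: M') :\ e == M') = matching_in E (T :\ v) M'.
  by move=> M'; rewrite -(mi_step simE M' uT vT eE) -!andbA.
rewrite scaler_sumr -sumrN; apply: eq_big => // M' HM; rewrite eqP1 in HM.
have eM' : e \notin M'.
  apply/negP => eM; case/and3P: HM => _ /forall_inP /(_ e eM) /subsetP /(_ v) H _.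
  by move: H; rewrite !inE eqxx orbT => /(_ isT).
have mc := mi_card simE HM.
rewrite !cardsU1 eM' uT big_setU1 //= exprS scalerA -scaleNr.
have := cardsD1 v T; rewrite vT => HT.
congr (_ *: 'X^_); first by rewrite mulN1r mulNr mulrCA.
rewrite HT /=; move: mc; set k := #|T :\ v|; set m := #|M'|; lia.
Qed.

End Rec.


Section Rec2.
Variables (R : comRingType) (V : finType) (E : {set {set V}}) (c : {set V} -> R) (a : V -> R).
Hypothesis simE : simple_graph E.

Definition coefR (D : {set V}) : R := (-1) ^+ #|D| * \prod_(v in D) a v.

Definition etaR (S : {set V}) : {poly R} :=
  \sum_(T : {set V} | T \subset S) coefR (S :\: T) *: muR E c T.

Lemma eta_rec (S : {set V}) u : u \notin S ->
  etaR (u |: S) = ('X - (a u)%:P) * etaR S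
     - \sum_(v in S | [set u; v] \in E) c [set u; v] *: etaR (S :\ v).
Proof.
move=> uS; rewrite /etaR (bigID (fun T : {set V} => u \in T)) /= addrC.
rewrite mulrBl addrAC [RHS]addrC; congr (_ + _).
  rewrite -mulNr -polyCN mul_polyC scaler_sumr; apply: eq_big.
    move=> T; apply/andP/idP => [[/subsetP sT uT]|/subsetP sT].
      apply/subsetP => x xT; have := sT x xT; rewrite !inE => /orP[/eqP xu|//].
      by move: uT; rewrite -xu xT.
    split; last by apply/negP => /sT; rewrite (negbTE uS).
    by apply/subsetP => x /sT; rewrite !inE => ->; rewrite orbT.
  move=> T /andP[_ uT]; rewrite scalerA; congr (_ *: _).
  have -> : (u |: S) :\: T = u |: (S :\: T).
    apply/setP => x; rewrite !inE; case: (x =P u) => [->|] //=.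
    by rewrite (negbTE uT).
  rewrite /coefR cardsU1 !inE (negbTE uS) /= big_setU1 ?inE ?(negbTE uS) ?andbF //=.
  by rewrite /= add1n exprS mulN1r !mulNr mulrCA.
rewrite (reindex_onto (fun T : {set V} => u |: T) (fun T : {set V} => T :\ u)) /=; last first.
  by move=> T /andP[_ uT]; rewrite setD1K.
have pred1 : forall T, (u |: T \subset u |: S) && (u \in u |: T) && ((u |: T) :\ u == T) = (T \subset S).
  move=> T; rewrite -andbA; apply/idP/idP.
    case/and3P => /subsetP sT _ /eqP TT; apply/subsetP => x xT.
    have := sT x; rewrite !inE xT orbT => /(_ isT) /orP[/eqP xu|//].
    by move: xT; rewrite -TT xu !inE eqxx.
  move=> /subsetP sT; rewrite setU11 setU1K ?eqxx ?andbT.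
    by apply/subsetP => x; rewrite !inE => /orP[->//|/sT ->]; rewrite orbT.
  by apply/negP => /sT; rewrite (negbTE uS).
rewrite (eq_bigl _ _ pred1).
have sd : forall T : {set V}, T \subset S -> (u |: S) :\: (u |: T) = S :\: T.
  move=> T _; apply/setP => x; rewrite !inE; case: (x =P u) => [->|] //=.
  by rewrite (negbTE uS) andbF.
have uT : forall T : {set V}, T \subset S -> u \notin T.
  by move=> T /subsetP sT; apply/negP => /sT; rewrite (negbTE uS).
transitivity (\sum_(T : {set V} | T \subset S) coefR (S :\: T) *: ('X * muR E c T
   - \sum_(v in T | [set u; v] \in E) c [set u; v] *: muR E c (T :\ v))).
  apply: eq_bigr => T sT; rewrite sd // mu_rec //; exact: uT.
rewrite (eq_bigr (fun T : {set V} => 'X * (coefR (S :\: T) *: muR E c T)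
   - \sum_(v in T | [set u; v] \in E) coefR (S :\: T) *: (c [set u; v] *: muR E c (T :\ v)))); last first.
  by move=> T _; rewrite scalerBr scalerAr; congr (_ - _); apply: scaler_sumr.
rewrite sumrB -mulr_sumr; congr (_ - _).
rewrite (exchange_big_dep (fun v => (v \in S) && ([set u; v] \in E))) /=; last first.
  by move=> T v /subsetP sT /andP[/sT -> ->].
apply: eq_bigr => v /andP[vS eE].
rewrite scaler_sumr.
rewrite (reindex_onto (fun T : {set V} => v |: T) (fun T : {set V} => T :\ v)) /=; last first.
  by move=> T /andP[_ /andP[vT _]]; rewrite setD1K.
apply: eq_big.
  move=> T; rewrite setU11 eE /= andbT; apply/idP/idP.
    case/andP => /subsetP sT /eqP TT; apply/subsetP => x xT.
    have := sT x; rewrite !inE xT orbT => /(_ isT) ->; rewrite andbT.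
    by apply/eqP => xv; move: xT; rewrite -TT xv !inE eqxx.
  move=> /subsetP sT; rewrite setU1K ?eqxx ?andbT.
    apply/subsetP => x; rewrite !inE => /orP[/eqP->//|/sT]; by rewrite !inE => /andP[].
  by apply/negP => /sT; rewrite !inE eqxx.
move=> T /andP[/subsetP sT /eqP TT].
have vT : v \notin T by apply/negP => xT; move: xT; rewrite -TT !inE eqxx.
rewrite setU1K // scalerA mulrC -scalerA; congr (_ *: (_ *: _)); congr coefR.
by apply/setP => x; rewrite !inE; case: (x =P v); rewrite /= ?andbF.
Qed.

End Rec2.


Section Mon.
Variables (R : comRingType) (V : finType) (E : {set {set V}}) (c : {set V} -> R) (a : V -> R).
Hypothesis simE : simple_graph E.

Lemma mu0 : muR E c set0 = 1.
Proof.
rewrite /muR (big_pred1 set0); first by rewrite !cards0 big_set0 mulr1 expr0 scale1r.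
move=> M /=; apply/idP/idP.
  case/and3P => ME /forall_inP Ms _; apply/eqP/setP => e; rewrite inE.
  apply/negP => eM; have := Ms e eM; rewrite subset0 => /eqP e0.
  by have := simE (subsetP ME e eM); rewrite e0 cards0.
move/eqP ->; apply/and3P; split; first exact: sub0set.
  by apply/forall_inP => e; rewrite inE.
by apply/trivIsetP => ? ?; rewrite inE.
Qed.

Lemma eta0 : etaR E c a set0 = 1.
Proof.
rewrite /etaR (big_pred1 set0); first by rewrite mu0 setD0 /coefR cards0 big_set0 mulr1 scale1r.
by move=> T /=; rewrite subset0.
Qed.

Lemma eta_monic (S : {set V}) : etaR E c a S \is monic /\ size (etaR E c a S) = #|S|.+1.
Proof.
move: {2}#|S| (leqnn #|S|) => n; elim: n S => [|n IH] S hS.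
  move: hS; rewrite leqn0 cards_eq0 => /eqP ->.
  by rewrite eta0 monic1 size_poly1 cards0.
have [->|[u uS]] := set_0Vmem S.
  by rewrite eta0 monic1 size_poly1 cards0.
have hS' := cardsD1 u S; rewrite uS /= in hS'.
have uS' : u \notin S :\ u by rewrite !inE eqxx.
have [m1 s1] := IH (S :\ u) ltac:(lia).
rewrite -(setD1K uS) (eta_rec c a simE uS').
have mX : 'X - (a u)%:P \is monic by apply: monicXsubC.
have sz1 : size (('X - (a u)%:P) * etaR E c a (S :\ u)) = #|S|.+1.
  by rewrite size_monicM ?monic_neq0 // size_XsubC s1 hS'.
have sz2 : (size (\sum_(v in S :\ u | [set u; v] \in E) c [set u; v] *: etaR E c a (S :\ u :\ v))%R <= #|S :\ u|)%N.
  apply: leq_trans (size_sum _ _ _) _; apply/bigmax_leqP => v /andP[vS _].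
  apply: leq_trans (size_scale_leq _ _) _.
  have hv := cardsD1 v (S :\ u); rewrite vS /= in hv.
  have [_ ->] := IH (S :\ u :\ v) ltac:(lia).
  by rewrite hv.
have -> : #|u |: S :\ u| = #|S| by rewrite setD1K.
split.
  rewrite monicE lead_coefDl; first by rewrite -monicE monicMl.
  by rewrite size_polyN sz1; apply: leq_ltn_trans sz2 _; lia.
by rewrite size_polyDl sz1 // size_polyN; apply: leq_ltn_trans sz2 _; lia.
Qed.

End Mon.


Section SOS.
Variable R : realFieldType.

Definition sos (F : {poly R}) := exists s : seq (R * {poly R}),
  all (fun p => 0 <= p.1) s /\ F = \sum_(p <- s) p.1 *: p.2 ^+ 2.

Lemma sos0 : sos 0.
Proof. by exists [::]; rewrite big_nil. Qed.

Lemma sosD F G : sos F -> sos G -> sos (F + G).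
Proof.
move=> [s [hs ->]] [t [ht ->]]; exists (s ++ t); rewrite all_cat hs ht big_cat.
by split.
Qed.

Lemma sosZ k F : 0 <= k -> sos F -> sos (k *: F).
Proof.
move=> k0 [s [hs ->]]; exists [seq (k * p.1, p.2) | p <- s]; split.
  by rewrite all_map; apply/allP => p ps /=; rewrite mulr_ge0 // (allP hs).
by rewrite big_map scaler_sumr; apply: eq_bigr => p _; rewrite scalerA.
Qed.

Lemma sos_sq f : sos (f ^+ 2).
Proof. by exists [:: (1, f)]; rewrite big_seq1 scale1r /= ler01. Qed.

Lemma sos_sum (I : finType) (P : pred I) (F : I -> {poly R}) :
  (forall i, P i -> sos (F i)) -> sos (\sum_(i | P i) F i).
Proof. by move=> H; apply: big_ind => //; [exact: sos0 | exact: sosD]. Qed.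

Variable theta : R.
Local Notation t := ('X - theta%:P).

Lemma sos_dvd0 (s : seq (R * {poly R})) : all (fun p => 0 <= p.1) s ->
  t %| \sum_(p <- s) p.1 *: p.2 ^+ 2 -> forall p, p \in s -> 0 < p.1 -> t %| p.2.
Proof.
move=> hs; rewrite dvdp_XsubCl /root horner_sum big_seq.
rewrite psumr_eq0; last first.
  by move=> p ps; rewrite hornerZ horner_exp mulr_ge0 ?sqr_ge0 //; apply: (allP hs).
move/allP => H p ps p0; have := H p ps; rewrite ps /= hornerZ horner_exp mulf_eq0.
by rewrite gt_eqF //= sqrf_eq0 dvdp_XsubCl.
Qed.

Lemma sos_dvd r (s : seq (R * {poly R})) : all (fun p => 0 <= p.1) s ->
  t ^+ (2 * r).+1 %| \sum_(p <- s) p.1 *: p.2 ^+ 2 ->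
  forall p, p \in s -> 0 < p.1 -> t ^+ r.+1 %| p.2.
Proof.
elim: r s => [|r IH] s hs hd.
  by move=> p ps p0; rewrite expr1; apply: sos_dvd0 hs _ p ps p0; rewrite -(expr1 t).
have hd' : t ^+ (2 * r).+1 %| \sum_(p <- s) p.1 *: p.2 ^+ 2.
  by apply: dvdp_trans hd; apply: dvdp_exp2l; lia.
have IHs := IH s hs hd'.
pose q (p : R * {poly R}) := if 0 < p.1 then p.2 %/ t ^+ r.+1 else 0.
pose s' := [seq (p.1, q p) | p : R * {poly R} <- s].
have hs' : all (fun p => 0 <= p.1) s' by rewrite all_map.
have eqF : \sum_(p <- s) p.1 *: p.2 ^+ 2 = t ^+ (2 * r.+1) * \sum_(p <- s') p.1 *: p.2 ^+ 2.
  rewrite big_map mulr_sumr; apply: eq_big_seq => p ps /=.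
  rewrite /q; case: ifP => p0.
    rewrite -scalerAr; congr (_ *: _).
    rewrite -{1}(divpK (IHs p ps p0)) exprMn mulrC -exprM; congr (_ * _).
    by congr (_ ^+ _); lia.
  have -> : p.1 = 0 by apply/eqP; rewrite eq_le (allP hs p ps) /= leNgt p0.
  by rewrite !scale0r mulr0.
move: hd; rewrite eqF.
have -> : (2 * r.+1).+1 = (2 * r.+1 + 1)%N by lia.
rewrite exprD dvdp_mul2l ?expf_neq0 ?polyXsubC_eq0 // expr1 => hd1.
move=> p ps p0.
have := sos_dvd0 hs' hd1 (map_f (fun p => (p.1, q p)) ps) p0.
rewrite /q p0 /= => h1.
rewrite -(divpK (IHs p ps p0)) exprS; exact: dvdp_mul.
Qed.

End SOS.


Section Wr.
Variables (R : realFieldType) (V : finType) (E : {set {set V}}) (c : {set V} -> R) (a : V -> R).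
Hypothesis simE : simple_graph E.
Hypothesis c_ge0 : forall e, 0 <= c e.

Local Notation P := (etaR E c a).

Definition Wr u (S : {set V}) := P (S :\ u) * (P S)^`() - P S * (P (S :\ u))^`().

Lemma Wr_rec u (S : {set V}) : u \notin S ->
  Wr u (u |: S) = P S ^+ 2 + \sum_(v in S | [set u; v] \in E) c [set u; v] *: Wr v S.
Proof.
move=> uS; rewrite /Wr setU1K // (eta_rec c a simE uS).
set f := P S.
set A := \sum_(v in S | _) _.
have dA : A^`() = \sum_(v in S | [set u; v] \in E) c [set u; v] *: (P (S :\ v))^`().
  by rewrite /A linear_sum; apply: eq_bigr => v _; rewrite linearZ.
have -> : \sum_(v in S | [set u; v] \in E) c [set u; v] *: (P (S :\ v) * f^`() - f * (P (S :\ v))^`())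
   = A * f^`() - f * A^`().
  rewrite dA mulr_suml mulr_sumr -sumrB; apply: eq_bigr => v _.
  by rewrite scalerBr scalerAl scalerAr.
rewrite derivB derivM derivXsubC mul1r.
set g := f^`(); set B := A^`(); set X := 'X - (a u)%:P.
ring.
Qed.

Lemma Wr_sos n : forall (S : {set V}) u, (#|S| <= n)%N -> u \in S -> sos (Wr u S - P (S :\ u) ^+ 2).
Proof.
elim: n => [|n IH] S u hS uS.
  by move: hS; rewrite leqn0 cards_eq0 => /eqP S0; move: uS; rewrite S0 inE.
have uS' : u \notin S :\ u by rewrite !inE eqxx.
have hS' := cardsD1 u S; rewrite uS /= in hS'.
rewrite -{1}(setD1K uS) Wr_rec // addrC addKr.
apply: sos_sum => v /andP[vS _]; apply: sosZ => //.
rewrite -(subrK (P (S :\ u :\ v) ^+ 2) (Wr v (S :\ u))).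
apply: sosD; last exact: sos_sq.
apply: IH => //; lia.
Qed.

End Wr.


Section Mup.
Variables (R : realFieldType) (V : finType) (E : {set {set V}}) (c : {set V} -> R) (a : V -> R).
Hypothesis simE : simple_graph E.
Hypothesis c_ge0 : forall e, 0 <= c e.
Variable theta : R.
Local Notation P := (etaR E c a).
Local Notation t := ('X - theta%:P).

Lemma deriv_dvdX n (p : {poly R}) : t ^+ n %| p -> t ^+ n.-1 %| p^`().
Proof.
case: n => [|k] /= h; first by rewrite expr0 dvd1p.
rewrite -(divpK h) derivM deriv_exp derivXsubC mul1r /=.
apply: dvdp_add; first by apply: dvdp_mull; apply: dvdp_exp2l.
by rewrite -mulr_natr mulrA; apply: dvdp_mulr; apply: dvdp_mull.
Qed.

Lemma P_neq0 S : P S != 0.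
Proof. by have [m _] := eta_monic c a simE S; apply: monic_neq0. Qed.

Lemma mupA (S : {set V}) u : u \in S -> (mup theta (P S) <= (mup theta (P (S :\ u))).+1)%N.
Proof.
move=> uS.
set m := mup theta (P S); set k := mup theta (P (S :\ u)).
rewrite leqNgt; apply/negP => hm.
have tg : t ^+ m %| P S by rewrite -mup_geq ?P_neq0.
have tf : t ^+ k %| P (S :\ u) by rewrite -mup_geq ?P_neq0.
have hW : t ^+ (2 * k).+1 %| Wr E c a u S.
  rewrite /Wr; apply: dvdp_sub.
    apply: (@dvdp_trans _ (t ^+ (k + m.-1))); first by apply: dvdp_exp2l; lia.
    by rewrite exprD; apply: dvdp_mul => //; apply: deriv_dvdX.
  apply: (@dvdp_trans _ (t ^+ (m + k.-1))); first by apply: dvdp_exp2l; lia.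
  by rewrite exprD; apply: dvdp_mul => //; apply: deriv_dvdX.
have [s [hs hsW]] := Wr_sos a simE c_ge0 (leqnn #|S|) uS.
have eW : Wr E c a u S = \sum_(p <- (1, P (S :\ u)) :: s) p.1 *: p.2 ^+ 2.
  by rewrite big_cons -hsW scale1r /= addrC subrK.
rewrite eW in hW.
have hs' : all (fun p : R * {poly R} => 0 <= p.1) ((1, P (S :\ u)) :: s) by rewrite /= ler01 hs.
have := sos_dvd hs' hW (mem_head _ _) ltr01; rewrite /=.
apply/negP; rewrite -mup_leq ?P_neq0 //.
Qed.

Lemma mupB (S : {set V}) u : u \in S -> (mup theta (P (S :\ u)) <= (mup theta (P S)).+1)%N.
Proof.
move=> uS.
have uS' : u \notin S :\ u by rewrite !inE eqxx.
set k := mup theta (P (S :\ u)).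
suff : t ^+ k.-1 %| P S by rewrite -mup_geq ?P_neq0 //; lia.
have tf : t ^+ k %| P (S :\ u) by rewrite -mup_geq ?P_neq0.
have tf' : t ^+ k.-1 %| P (S :\ u) by apply: dvdp_trans tf; apply: dvdp_exp2l; lia.
rewrite -{1}(setD1K uS) (eta_rec c a simE uS').
apply: dvdp_sub; first exact: dvdp_mull.
apply: (big_ind (fun q => t ^+ k.-1 %| q)); first exact: dvdp0.
  by move=> x y; apply: dvdp_add.
move=> v /andP[vS _]; rewrite -mul_polyC; apply: dvdp_mull.
have := mupA vS; rewrite -/k => hk.
by rewrite -mup_geq ?P_neq0 //; lia.
Qed.

End Mup.


Lemma eta_map (R : realType) (V : finType) (E : {set {set V}})
  (w : {set V} -> R[i]) (w1 : V -> R) (S : {set V}) :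
  eta_w E w w1 S = map_poly (real_complex R)
     (etaR E (fun e => (complex.Re (w e)) ^+ 2 + (complex.Im (w e)) ^+ 2) w1 S).
Proof.
rewrite /eta_w /etaR rmorph_sum; apply: eq_bigr => T _.
rewrite /= map_polyZ /mu_w /muR rmorph_sum /coefR; congr (_ *: _).
  by rewrite rmorphM rmorphXn rmorphN1 rmorph_prod.
apply: eq_bigr => M _; rewrite /= map_polyZ map_polyXn; congr (_ *: _).
rewrite rmorphM rmorphXn rmorphN1 rmorph_prod; congr (_ * _).
by apply: eq_bigr => e _; rewrite -add_Re2_Im2.
Qed.

Lemma mup_map (R : realType) (p : {poly R}) (x : R) : p != 0 ->
  mup ((x%:C)%C) (map_poly (real_complex R) p) = mup x p.
Proof.
move=> p0; have q0 : map_poly (real_complex R) p != 0 by rewrite map_poly_eq0.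
apply/eqP; rewrite eqn_leq; apply/andP; split.
  rewrite mup_leq // -map_polyXsubC -rmorphXn dvdp_map -mup_leq //.
rewrite mup_geq // -map_polyXsubC -rmorphXn dvdp_map -mup_geq //.
Qed.

Theorem lemma4p2 (R : realType) (V : finType) (E : {set {set V}})
  (w : {set V} -> R[i]) (w1 : V -> R) (u : V) (theta : R) :
  simple_graph E ->
  (forall e, e \in E -> w e != 0) ->
  (mult E w w1 theta [set: V] - 1 <= mult E w w1 theta ([set: V] :\ u)
     <= mult E w w1 theta [set: V] + 1)%N.
Proof.
move=> simE _.
rewrite /mult !eta_map !mup_map ?(P_neq0 _ w1 simE) //.
set c := fun e => (complex.Re (w e)) ^+ 2 + (complex.Im (w e)) ^+ 2.
have c_ge0 : forall e, 0 <= c e by move=> e; rewrite /c addr_ge0 ?sqr_ge0.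
have uT : u \in [set: V] by rewrite inE.
have h1 := mupA w1 simE c_ge0 theta uT.
have h2 := mupB w1 simE c_ge0 theta uT.
apply/andP; split; first by rewrite leq_subLR add1n; exact: h1.
by rewrite addn1; exact: h2.
Qed.
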